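(* Let $\Sigma$ be a shift space, $Y$ an irreducible shift of finite type, and $\phi : \Sigma \to Y$ a right closing open code. Then $\Sigma$ is a nonwandering shift of finite type.
   Context: Shift spaces are closed shift-invariant subsets of $\mathcal{A}^{\mathbb{Z}}$; a code is a continuous shift-commuting map; open: images of open sets are open. Irreducible: for all words $u,v$ there is $w$ with $uwv$ a word. Nonwandering: for every word $u$ there is $w$ with $uwu$ a word. Right closing: $\phi$ never identifies two distinct left asymptotic points, where $x,\bar x$ are left asymptotic if $d(\sigma^{-n}x,\sigma^{-n}\bar x)\to0$, $d(x,\bar x)=2^{-k}$ with $k$ maximal such that $x_{[-k,k]}=\bar x_{[-k,k]}$. *)

(* Defs.v *)
From Stdlib Require Import ZArith List.
Import ListNotations.
Open Scope Z_scope.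

Definition finite_alphabet (A : Type) : Prop := exists l : list A, forall a, In a l.

Definition shift {A : Type} (x : Z -> A) : Z -> A := fun i => x (i + 1).

(* x and y agree on the window [-k,k], i.e. d(x,y) <= 2^-k (or x = y). *)
Definition agree_on {A : Type} (k : Z) (x y : Z -> A) : Prop :=
  forall i, -k <= i <= k -> x i = y i.

Definition block {A : Type} (x : Z -> A) (i : Z) (n : nat) : list A :=
  map (fun j => x (i + Z.of_nat j)) (seq 0 n).

Definition closed_set {A : Type} (X : (Z -> A) -> Prop) : Prop :=
  forall x, (forall k, exists y, X y /\ agree_on k x y) -> X x.

Definition shift_invariant {A : Type} (X : (Z -> A) -> Prop) : Prop :=
  forall x, X x <-> X (shift x).

Definition shift_space {A : Type} (X : (Z -> A) -> Prop) : Prop :=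
  closed_set X /\ shift_invariant X.

Definition is_word {A : Type} (X : (Z -> A) -> Prop) (u : list A) : Prop :=
  exists x i, X x /\ block x i (length u) = u.

Definition occurs_in {A : Type} (u : list A) (x : Z -> A) : Prop :=
  exists i, block x i (length u) = u.

Definition SFT {A : Type} (X : (Z -> A) -> Prop) : Prop :=
  exists F : list (list A),
    forall x, X x <-> (forall u, In u F -> ~ occurs_in u x).

Definition irreducible {A : Type} (X : (Z -> A) -> Prop) : Prop :=
  forall u v, is_word X u -> is_word X v -> exists w, is_word X (u ++ w ++ v).

Definition nonwandering {A : Type} (X : (Z -> A) -> Prop) : Prop :=
  forall u, is_word X u -> exists w, is_word X (u ++ w ++ u).

Definition rel_open {A : Type} (X U : (Z -> A) -> Prop) : Prop :=
  (forall x, U x -> X x) /\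
  forall x, U x -> exists k, forall y, X y -> agree_on k x y -> U y.

Definition code {A B : Type} (S : (Z -> A) -> Prop) (Y : (Z -> B) -> Prop)
  (phi : (Z -> A) -> (Z -> B)) : Prop :=
  (forall x, S x -> Y (phi x)) /\
  (forall x k, S x -> exists m, forall y, S y -> agree_on m x y ->
       agree_on k (phi x) (phi y)) /\
  (forall x, S x -> phi (shift x) = shift (phi x)).

Definition open_code {A B : Type} (S : (Z -> A) -> Prop) (Y : (Z -> B) -> Prop)
  (phi : (Z -> A) -> (Z -> B)) : Prop :=
  forall U, rel_open S U ->
    rel_open Y (fun y => exists x, U x /\ phi x = y).

Definition left_asymptotic {A : Type} (x x' : Z -> A) : Prop :=
  forall k, exists N : nat, forall n : nat, (N <= n)%nat ->
    agree_on k (fun i => x (i - Z.of_nat n)) (fun i => x' (i - Z.of_nat n)).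

Definition right_closing {A B : Type} (S : (Z -> A) -> Prop)
  (phi : (Z -> A) -> (Z -> B)) : Prop :=
  forall x x', S x -> S x' -> left_asymptotic x x' -> phi x = phi x' -> x = x'.

(* Main.v *)
Require Import Defs.
From Stdlib Require Import ZArith List.
From Stdlib Require Import Lia Classical FunctionalExtensionality IndefiniteDescription.
Import ListNotations.
Notation shift := Defs.shift.
Open Scope Z_scope.


Definition agr {A : Type} (a b : Z) (x y : Z -> A) : Prop :=
  forall i, a <= i <= b -> x i = y i.

Definition tr {A : Type} (n : Z) (x : Z -> A) : Z -> A := fun i => x (i + n).

Lemma agree_agr {A} k (x y : Z -> A) : agree_on k x y <-> agr (-k) k x y.
Proof. unfold agree_on, agr; tauto. Qed.

Lemma agr_sub {A} a b a' b' (x y : Z -> A) : agr a b x y -> a <= a' -> b' <= b -> agr a' b' x y.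
Proof. intros H h1 h2 i hi; apply H; lia. Qed.

Lemma agr_sym {A} a b (x y : Z -> A) : agr a b x y -> agr a b y x.
Proof. intros H i hi; symmetry; auto. Qed.

Lemma agr_trans {A} a b (x y z : Z -> A) : agr a b x y -> agr a b y z -> agr a b x z.
Proof. intros H1 H2 i hi; rewrite H1; auto. Qed.

Lemma agree_mono {A} k k' (x y : Z -> A) : agree_on k x y -> k' <= k -> agree_on k' x y.
Proof. intros H h i hi; apply H; lia. Qed.

Lemma agree_sym {A} k (x y : Z -> A) : agree_on k x y -> agree_on k y x.
Proof. intros H i hi; symmetry; auto. Qed.

Lemma agree_trans {A} k (x y z : Z -> A) : agree_on k x y -> agree_on k y z -> agree_on k x z.
Proof. intros H1 H2 i hi; rewrite H1; auto. Qed.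

Lemma tr_tr {A} n m (x : Z -> A) : tr n (tr m x) = tr (n + m) x.
Proof. apply functional_extensionality; intro i; unfold tr; f_equal; lia. Qed.

Lemma tr_0 {A} (x : Z -> A) : tr 0 x = x.
Proof. apply functional_extensionality; intro i; unfold tr; f_equal; lia. Qed.

Lemma shift_tr {A} (x : Z -> A) : shift x = tr 1 x.
Proof. reflexivity. Qed.

Lemma tr_agr {A} n a b (x y : Z -> A) : agr (a + n) (b + n) x y <-> agr a b (tr n x) (tr n y).
Proof. unfold agr, tr; split; intros H i hi.
- apply H; lia.
- replace i with ((i - n) + n) by lia; apply H; lia. Qed.

Lemma inv_tr {A} (X : (Z -> A) -> Prop) : shift_invariant X -> forall n x, X x -> X (tr n x).
Proof.
  intros H.
  assert (Hp : forall k : nat, forall x, X x -> X (tr (Z.of_nat k) x) /\ X (tr (- Z.of_nat k) x)).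
  { induction k as [|k IH]; intros x hx.
    - simpl; rewrite tr_0; auto.
    - destruct (IH x hx) as [h1 h2]; split.
      + replace (Z.of_nat (S k)) with (1 + Z.of_nat k) by lia.
        rewrite <- tr_tr, <- shift_tr; apply (proj1 (H _)); auto.
      + apply (proj2 (H _)); rewrite shift_tr, tr_tr.
        replace (1 + - Z.of_nat (S k)) with (- Z.of_nat k) by lia; auto. }
  intros n x hx. destruct (Z_le_gt_dec 0 n).
  - replace n with (Z.of_nat (Z.to_nat n)) by lia; apply Hp; auto.
  - replace n with (- Z.of_nat (Z.to_nat (- n))) by lia; apply Hp; auto.
Qed.

Lemma code_tr {A B} (S : (Z -> A) -> Prop) (Y : (Z -> B) -> Prop) phi : shift_space S -> code S Y phi ->
  forall n x, S x -> phi (tr n x) = tr n (phi x).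
Proof.
  intros [_ HS] [_ [_ Hc]].
  assert (Hp : forall k : nat, forall x, S x -> phi (tr (Z.of_nat k) x) = tr (Z.of_nat k) (phi x)
     /\ phi (tr (- Z.of_nat k) x) = tr (- Z.of_nat k) (phi x)).
  { induction k as [|k IH]; intros x hx.
    - simpl; rewrite !tr_0; auto.
    - destruct (IH x hx) as [h1 h2]; split.
      + replace (Z.of_nat (Datatypes.S k)) with (1 + Z.of_nat k) by lia.
        rewrite <- (tr_tr 1 (Z.of_nat k) x), <- (tr_tr 1 (Z.of_nat k) (phi x)), <- !shift_tr, Hc, h1; auto.
        apply (inv_tr _ HS); auto.
      + assert (hs : S (tr (- Z.of_nat (Datatypes.S k)) x)) by (apply (inv_tr _ HS); auto).
        assert (e : phi (shift (tr (- Z.of_nat (Datatypes.S k)) x)) = tr (- Z.of_nat k) (phi x)).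
        { rewrite shift_tr, tr_tr. replace (1 + - Z.of_nat (Datatypes.S k)) with (- Z.of_nat k) by lia; auto. }
        rewrite Hc in e by auto.
        apply functional_extensionality; intro i.
        assert (e2 := f_equal (fun f => f (i - 1)) e). unfold shift, tr in e2 |- *.
        replace (i - 1 + 1) with i in e2 by lia. rewrite e2. f_equal; lia. }
  intros n x hx. destruct (Z_le_gt_dec 0 n).
  - replace n with (Z.of_nat (Z.to_nat n)) by lia; apply Hp; auto.
  - replace n with (- Z.of_nat (Z.to_nat (- n))) by lia; apply Hp; auto.
Qed.

Lemma block_nth {A} (x : Z -> A) i n t d : (t < n)%nat -> nth t (block x i n) d = x (i + Z.of_nat t).
Proof. intros h; unfold block.
  rewrite (nth_indep _ d ((fun j => x (i + Z.of_nat j)) 0%nat)).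
  2: rewrite length_map, length_seq; auto.
  rewrite (map_nth (fun j => x (i + Z.of_nat j))), seq_nth; auto. Qed.

Lemma block_length {A} (x : Z -> A) i n : length (block x i n) = n.
Proof. unfold block; rewrite length_map, length_seq; auto. Qed.

Lemma block_ext {A} (x y : Z -> A) i j n : (forall t, (t < n)%nat -> x (i + Z.of_nat t) = y (j + Z.of_nat t)) ->
  block x i n = block y j n.
Proof. intros H; unfold block; apply map_ext_in; intros t ht; apply in_seq in ht; apply H; lia. Qed.

Lemma block_eq_inv {A} (x y : Z -> A) i j n : block x i n = block y j n ->
  forall t, (t < n)%nat -> x (i + Z.of_nat t) = y (j + Z.of_nat t).
Proof. intros H t ht. destruct n. lia.
  rewrite <- (block_nth x i (S n) t (x 0)), <- (block_nth y j (S n) t (x 0)) by auto. congruence. Qed.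

Lemma map_seq_shift {B} (f : nat -> B) a b : map f (seq a b) = map (fun j => f (a + j)%nat) (seq 0 b).
Proof. revert a f; induction b as [|b IH]; intros a f; simpl; auto.
  rewrite Nat.add_0_r; f_equal. rewrite IH, (IH 1%nat). apply map_ext; intros; f_equal; lia. Qed.

Lemma block_app {A} (x : Z -> A) i a b : block x i (a + b) = block x i a ++ block x (i + Z.of_nat a) b.
Proof. unfold block. rewrite seq_app, map_app. f_equal. simpl.
  rewrite map_seq_shift. apply map_ext; intros; f_equal; lia. Qed.

Lemma block_tr {A} (x : Z -> A) n i k : block (tr n x) i k = block x (i + n) k.
Proof. apply block_ext; intros; unfold tr; f_equal; lia. Qed.


Definition inf (P : nat -> Prop) : Prop := forall M, exists m, (M <= m)%nat /\ P m.

Lemma pigeon_inf {T} (l : list T) (P : nat -> Prop) (Q : T -> nat -> Prop) :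
  inf P -> (forall m, P m -> exists t, In t l /\ Q t m) -> exists t, In t l /\ inf (Q t).
Proof.
  revert P; induction l as [|t l IH]; intros P HP H.
  - destruct (HP 0%nat) as [m [_ hm]]. destruct (H m hm) as [t [[] _]].
  - destruct (classic (inf (Q t))) as [h|h]. { exists t; split; simpl; auto. }
    apply not_all_ex_not in h. destruct h as [M0 h].
    assert (h' : forall m, (M0 <= m)%nat -> ~ Q t m).
    { intros m hm hq; apply h; exists m; auto. }
    destruct (IH (fun m => P m /\ (M0 <= m)%nat)) as [t' [ht' hq]].
    + intros M. destruct (HP (Nat.max M M0)) as [m [hm pm]]. exists m; split; [lia|split; auto; lia].
    + intros m [pm hm]. destruct (H m pm) as [t'' [[e|i] q]].
      * subst; exfalso; exact (h' m hm q).
      * exists t''; auto.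
    + exists t'; split; simpl; auto.
Qed.

Lemma inf_mono (P Q : nat -> Prop) : inf P -> (forall m, P m -> Q m) -> inf Q.
Proof. intros H h M; destruct (H M) as [m [a b]]; exists m; auto. Qed.

Section Cluster.
Variable C : Type.
Variable lC : list C.
Hypothesis hC : forall c, In c lC.
Variable s : nat -> (Z -> C).

Definition good (k : nat) (p : Z -> C) := inf (fun m => agree_on (Z.of_nat k - 1) (s m) p).

Lemma good_step k p : good k p -> exists p', good (Datatypes.S k) p' /\ agree_on (Z.of_nat k - 1) p' p.
Proof.
  intros H.
  destruct (pigeon_inf (list_prod lC lC) _ (fun ab m => agree_on (Z.of_nat k - 1) (s m) p /\
     s m (- Z.of_nat k) = fst ab /\ s m (Z.of_nat k) = snd ab) H) as [[a b] [_ Hi]].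
  { intros m hm. exists (s m (- Z.of_nat k), s m (Z.of_nat k)); split.
    - apply in_prod; auto.
    - simpl; auto. }
  exists (fun i => if Z.eq_dec i (- Z.of_nat k) then a else if Z.eq_dec i (Z.of_nat k) then b else p i).
  split.
  - apply (inf_mono _ _ Hi). intros m [h1 [h2 h3]] i hi. simpl in h2, h3.
    destruct (Z.eq_dec i (- Z.of_nat k)); [subst; auto|].
    destruct (Z.eq_dec i (Z.of_nat k)); [subst; auto|].
    apply h1; lia.
  - intros i hi. destruct (Z.eq_dec i (- Z.of_nat k)); [lia|].
    destruct (Z.eq_dec i (Z.of_nat k)); [lia|]. auto.
Qed.

Lemma cluster : exists c : Z -> C, forall (k : Z) (M : nat), exists m, (M <= m)%nat /\ agree_on k (s m) c.
Proof.
  destruct (functional_choice (fun (kp : nat * (Z -> C)) p' =>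
     good (fst kp) (snd kp) -> good (Datatypes.S (fst kp)) p' /\ agree_on (Z.of_nat (fst kp) - 1) p' (snd kp)))
     as [F HF].
  { intros [k p]. destruct (classic (good k p)) as [h|h].
    - destruct (good_step k p h) as [p' hp']. exists p'; auto.
    - exists p; intro; contradiction. }
  set (pats := fix pats (k : nat) : Z -> C := match k with O => s 0%nat | Datatypes.S k => F (k, pats k) end).
  assert (Hg : forall k, good k (pats k)).
  { induction k as [|k IH].
    - intros M. exists M; split; auto. intros i hi; simpl in hi; lia.
    - simpl. apply (HF (k, pats k)); auto. }
  assert (Hs : forall k, agree_on (Z.of_nat k - 1) (pats (Datatypes.S k)) (pats k)).
  { intros k. simpl. apply (HF (k, pats k)); auto. }
  set (c := fun i => pats (Datatypes.S (Z.to_nat (Z.abs i))) i).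
  assert (Hc : forall k, agree_on (Z.of_nat k - 1) (pats k) c).
  { intros k i hi. unfold c.
    assert (hd : forall d, pats (Datatypes.S (Z.to_nat (Z.abs i)) + d)%nat i = pats (Datatypes.S (Z.to_nat (Z.abs i))) i).
    { induction d as [|d IH]. rewrite Nat.add_0_r; auto.
      rewrite Nat.add_succ_r, Hs; auto. lia. }
    replace k with (Datatypes.S (Z.to_nat (Z.abs i)) + (k - Datatypes.S (Z.to_nat (Z.abs i))))%nat by lia.
    apply hd. }
  exists c. intros k M.
  destruct (Hg (Datatypes.S (Z.to_nat k)) M) as [m [hm ha]].
  exists m; split; auto.
  apply agree_mono with (Z.of_nat (Datatypes.S (Z.to_nat k)) - 1); [|lia].
  eapply agree_trans; eauto.
Qed.
End Cluster.


Section Unif.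
Variables A B : Type.
Hypothesis hA : finite_alphabet A.
Variable X : (Z -> A) -> Prop.
Variable Y : (Z -> B) -> Prop.
Variable phi : (Z -> A) -> (Z -> B).
Hypothesis hX : shift_space X.
Hypothesis hc : code X Y phi.

Lemma closed_cluster (s : nat -> Z -> A) c : (forall m, X (s m)) ->
  (forall k (M : nat), exists m, (M <= m)%nat /\ agree_on k (s m) c) -> X c.
Proof. intros H1 H2. apply (proj1 hX). intros k. destruct (H2 k 0%nat) as [m [_ h]].
  exists (s m); split; auto. apply agree_sym; auto. Qed.

Lemma U1 : exists m, 0 <= m /\ forall x y, X x -> X y -> agree_on m x y -> phi x 0 = phi y 0.
Proof.
  apply NNPP; intro H.
  assert (H' : forall n : nat, exists xy : (Z -> A) * (Z -> A), X (fst xy) /\ X (snd xy) /\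
     agree_on (Z.of_nat n) (fst xy) (snd xy) /\ phi (fst xy) 0 <> phi (snd xy) 0).
  { intros n. apply NNPP; intro h. apply H. exists (Z.of_nat n); split; [lia|].
    intros x y hx hy ha. apply NNPP; intro hne. apply h. exists (x, y); simpl; auto. }
  destruct (functional_choice _ H') as [f hf].
  destruct hA as [lA hlA].
  destruct (cluster _ lA hlA (fun n => fst (f n))) as [c hcl].
  assert (Xc : X c) by (apply (closed_cluster (fun n => fst (f n)) c); [intro m; apply hf|auto]).
  destruct hc as [_ [hcont _]].
  destruct (hcont c 0 Xc) as [m0 hm0].
  destruct (hcl m0 (Z.to_nat m0)) as [m [hm ha]].
  destruct (hf m) as [h1 [h2 [h3 h4]]].
  apply h4.
  assert (e1 := hm0 _ h1 (agree_sym _ _ _ ha) 0 ltac:(lia)).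
  assert (e2 := hm0 (snd (f m)) h2). 
  rewrite <- e1, e2; auto.
  apply agree_trans with (fst (f m)); [apply agree_sym; auto|].
  apply agree_mono with (Z.of_nat m); auto; lia.
  lia.
Qed.

Definition blockrad m := forall x y, X x -> X y -> agree_on m x y -> phi x 0 = phi y 0.

Lemma U1p m : blockrad m -> forall x y p, X x -> X y -> agr (p - m) (p + m) x y -> phi x p = phi y p.
Proof.
  intros H x y p hx hy ha.
  assert (e := H (tr p x) (tr p y) (inv_tr _ (proj2 hX) p x hx) (inv_tr _ (proj2 hX) p y hy)).
  rewrite !(code_tr X Y phi hX hc) in e by auto. unfold tr in e. simpl in e. apply e.
  apply agree_agr, tr_agr. eapply agr_sub; eauto; lia.
Qed.

Lemma U3 : right_closing X phi -> exists N, 0 <= N /\ forall x x', X x -> X x' -> agr (-N) 0 x x' ->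
   agr (-N) N (phi x) (phi x') -> x 1 = x' 1.
Proof.
  intros hrc. destruct U1 as [m1 [hm1 Hm1]].
  apply NNPP; intro H.
  assert (H' : forall n : nat, exists xy : (Z -> A) * (Z -> A), X (fst xy) /\ X (snd xy) /\
     agr (- Z.of_nat n) 0 (fst xy) (snd xy) /\ agr (- Z.of_nat n) (Z.of_nat n) (phi (fst xy)) (phi (snd xy))
     /\ fst xy 1 <> snd xy 1).
  { intros n. apply NNPP; intro h. apply H. exists (Z.of_nat n); split; [lia|].
    intros x y hx hy ha hb. apply NNPP; intro hne. apply h. exists (x, y); simpl; auto. }
  destruct (functional_choice _ H') as [f hf].
  destruct hA as [lA hlA].
  assert (hl2 : forall c : A * A, In c (list_prod lA lA)) by (intros [a b]; apply in_prod; auto).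
  destruct (cluster _ _ hl2 (fun n i => (fst (f n) i, snd (f n) i))) as [c hcl].
  set (x := fun i => fst (c i)). set (x' := fun i => snd (c i)).
  assert (hcx : forall k M, exists m, (M <= m)%nat /\ agree_on k (fst (f m)) x /\ agree_on k (snd (f m)) x').
  { intros k M. destruct (hcl k M) as [m [hm ha]]. exists m; split; auto.
    split; intros i hi; unfold x, x'; rewrite <- (ha i hi); auto. }
  assert (Xx : X x).
  { apply (closed_cluster (fun n => fst (f n)) x); [intro; apply hf|].
    intros k M; destruct (hcx k M) as [m [? [? ?]]]; eauto. }
  assert (Xx' : X x').
  { apply (closed_cluster (fun n => snd (f n)) x'); [intro; apply hf|].
    intros k M; destruct (hcx k M) as [m [? [? ?]]]; eauto. }
  assert (Hneg : forall i, i <= 0 -> x i = x' i).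
  { intros i hi. destruct (hcx (- i) (Z.to_nat (- i))) as [m [hm [h1 h2]]].
    rewrite <- h1, <- h2 by lia. apply hf; lia. }
  assert (Hla : left_asymptotic x x').
  { intros k. exists (Z.to_nat k). intros n hn i hi. apply Hneg. lia. }
  assert (Hphi : phi x = phi x').
  { apply functional_extensionality; intro i.
    destruct (hcx (Z.abs i + m1) (Z.to_nat (Z.abs i))) as [m [hm [h1 h2]]].
    destruct (hf m) as [f1 [f2 [f3 [f4 f5]]]].
    rewrite <- (U1p m1 Hm1 (fst (f m)) x i f1 Xx), <- (U1p m1 Hm1 (snd (f m)) x' i f2 Xx').
    - apply f4; lia.
    - intros j hj; apply h2; lia.
    - intros j hj; apply h1; lia. }
  assert (e := hrc x x' Xx Xx' Hla Hphi).
  destruct (hcx 1 0%nat) as [m [_ [h1 h2]]].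
  apply (proj2 (proj2 (proj2 (proj2 (hf m))))).
  rewrite (h1 1), (h2 1) by lia. rewrite e; auto.
Qed.

Lemma U4 : open_code X Y phi -> forall k, exists M, 0 <= M /\ forall x y, X x -> Y y ->
   agree_on M (phi x) y -> exists x', X x' /\ phi x' = y /\ agree_on k x x'.
Proof.
  intros hop k. destruct U1 as [m1 [hm1 Hm1]].
  apply NNPP; intro H.
  assert (H' : forall n : nat, exists xy : (Z -> A) * (Z -> B), X (fst xy) /\ Y (snd xy) /\
     agree_on (Z.of_nat n) (phi (fst xy)) (snd xy) /\
     ~ (exists x', X x' /\ phi x' = snd xy /\ agree_on k (fst xy) x')).
  { intros n. apply NNPP; intro h. apply H. exists (Z.of_nat n); split; [lia|].
    intros x y hx hy ha. apply NNPP; intro hne. apply h. exists (x, y); simpl; auto. }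
  destruct (functional_choice _ H') as [f hf].
  destruct hA as [lA hlA].
  destruct (cluster _ lA hlA (fun n => fst (f n))) as [c hcl].
  assert (Xc : X c) by (apply (closed_cluster (fun n => fst (f n)) c); [intro m; apply hf|auto]).
  destruct (hop (fun z => X z /\ agree_on k c z)) as [_ Ho].
  { split. intros z [? ?]; auto.
    intros z [hz hz2]. exists k. intros y hy hzy. split; auto. eapply agree_trans; eauto. }
  destruct (Ho (phi c)) as [m0 hm0].
  { exists c; split; auto. split; auto. intros i hi; auto. }
  destruct (hcl (Z.abs k + Z.abs m0 + m1) (Z.to_nat (Z.abs m0))) as [m [hm ha]].
  destruct (hf m) as [h1 [h2 [h3 h4]]].
  apply h4.
  destruct (hm0 (snd (f m)) h2) as [z [[hz hz2] hz3]].
  { intros i hi. rewrite <- (h3 i) by lia.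
    apply (U1p m1 Hm1); auto. intros j hj; symmetry; apply ha; lia. }
  exists z; split; auto; split; auto.
  intros i hi. rewrite (ha i) by lia. apply hz2; auto.
Qed.
End Unif.


Section RC.
Variables A B : Type.
Variable X : (Z -> A) -> Prop.
Variable Y : (Z -> B) -> Prop.
Variable phi : (Z -> A) -> (Z -> B).
Hypothesis hX : shift_space X.
Hypothesis hc : code X Y phi.
Variable N : Z.
Hypothesis HN : forall x x', X x -> X x' -> agr (-N) 0 x x' ->
   agr (-N) N (phi x) (phi x') -> x 1 = x' 1.

Lemma RCp x x' p : X x -> X x' -> agr (p - N) p x x' -> agr (p - N) (p + N) (phi x) (phi x') ->
  x (p + 1) = x' (p + 1).
Proof.
  intros hx hx' h1 h2.
  assert (e := HN (tr p x) (tr p x') (inv_tr _ (proj2 hX) p x hx) (inv_tr _ (proj2 hX) p x' hx')).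
  rewrite !(code_tr X Y phi hX hc) in e by auto. unfold tr in e.
  replace (p + 1) with (1 + p) by lia. apply e.
  - apply tr_agr. eapply agr_sub; eauto; lia.
  - apply (tr_agr p (-N) N (phi x) (phi x')). eapply agr_sub; eauto; lia.
Qed.

Lemma RCP a0 b x x' : X x -> X x' -> agr a0 (a0 + N) x x' -> agr a0 b (phi x) (phi x') ->
  forall q, a0 + N <= q -> q <= b - N + 1 -> agr a0 q x x'.
Proof.
  intros hx hx' h1 h2.
  assert (H : forall t : nat, a0 + N + Z.of_nat t <= b - N + 1 -> agr a0 (a0 + N + Z.of_nat t) x x').
  { induction t as [|t IH]; intros ht.
    - eapply agr_sub; eauto; lia.
    - assert (IH' := IH ltac:(lia)).
      intros i hi. destruct (Z.eq_dec i (a0 + N + Z.of_nat (Datatypes.S t))) as [e|ne].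
      + subst i. replace (a0 + N + Z.of_nat (Datatypes.S t)) with ((a0 + N + Z.of_nat t) + 1) by lia.
        apply RCp; auto.
        * destruct (Z_le_gt_dec 0 N). eapply agr_sub; eauto; lia.
          intros j hj; lia.
        * destruct (Z_le_gt_dec 0 N). eapply agr_sub; eauto; lia.
          intros j hj; lia.
      + apply IH'; lia. }
  intros q hq1 hq2. replace q with (a0 + N + Z.of_nat (Z.to_nat (q - a0 - N))) by lia.
  apply H; lia.
Qed.
End RC.

Definition glue {B} (g : Z) (y1 y2 : Z -> B) : Z -> B := fun p => if p <=? g then y1 p else y2 p.

Lemma glue_Y {B} (Y : (Z -> B) -> Prop) FY K :
  (forall x, Y x <-> (forall u, In u FY -> ~ occurs_in u x)) ->
  (forall u, In u FY -> Z.of_nat (length u) <= K) ->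
  forall g y1 y2, Y y1 -> Y y2 -> agr (g - K) g y1 y2 -> Y (glue g y1 y2).
Proof.
  intros HY HK g y1 y2 h1 h2 ha. apply HY. intros u hu [p hp].
  assert (hl := HK u hu).
  destruct (Z_le_gt_dec (p + Z.of_nat (length u)) (g + 1)).
  - apply (proj1 (HY y1) h1 u hu). exists p. rewrite <- hp at 2. apply block_ext.
    intros t ht. unfold glue. destruct (Z.leb_spec (p + Z.of_nat t) g); auto; lia.
  - apply (proj1 (HY y2) h2 u hu). exists p. rewrite <- hp at 2. apply block_ext.
    intros t ht. unfold glue. destruct (Z.leb_spec (p + Z.of_nat t) g); auto.
    symmetry; apply ha; lia.
Qed.

Fixpoint words {A} (l : list A) (n : nat) : list (list A) :=
  match n with
  | O => [[]]
  | Datatypes.S n => flat_map (fun a => map (cons a) (words l n)) l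
  end.

Lemma words_in {A} (l : list A) : (forall a, In a l) -> forall u, In u (words l (length u)).
Proof.
  intros hl u; induction u as [|a u IH]; simpl; auto.
  apply in_flat_map. exists a; split; auto. apply in_map; auto.
Qed.

Lemma SFT_bound {B} (FY : list (list B)) : exists K, 0 <= K /\ forall u, In u FY -> Z.of_nat (length u) <= K.
Proof.
  induction FY as [|v FY [K [hK IH]]].
  - exists 0; split; [lia|]; intros u [].
  - exists (Z.max K (Z.of_nat (length v))); split; [lia|].
    intros u [e|i]. subst; lia. specialize (IH u i); lia.
Qed.


Section Step.
Variables A B : Type.
Variable X : (Z -> A) -> Prop.
Variable Y : (Z -> B) -> Prop.
Variable phi : (Z -> A) -> (Z -> B).
Hypothesis hX : shift_space X.
Hypothesis hY : shift_space Y.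
Hypothesis hc : code X Y phi.
Variables m N M K L : Z.
Hypotheses (hm : 0 <= m) (hN : 0 <= N) (hM : 0 <= M) (hK : 0 <= K).
Hypothesis hL : L = 2*m + 2*N + 2*K + M + 3.
Hypothesis Hm : blockrad A B X phi m.
Hypothesis HN : forall x x', X x -> X x' -> agr (-N) 0 x x' ->
   agr (-N) N (phi x) (phi x') -> x 1 = x' 1.
Hypothesis HM : forall x y, X x -> Y y ->
   agree_on M (phi x) y -> exists x', X x' /\ phi x' = y /\ agree_on N x x'.
Variable FY : list (list B).
Hypothesis HY : forall x, Y x <-> (forall u, In u FY -> ~ occurs_in u x).
Hypothesis HK : forall u, In u FY -> Z.of_nat (length u) <= K.

Lemma step (x : Z -> A) i e z w : X z -> X w -> e - i >= L - 1 -> agr i e z x -> agr (e + 2 - L) (e + 1) w x ->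
  exists z'', X z'' /\ agr i (e + 1) z'' x.
Proof.
  intros hz hw hei hzx hwx.
  set (a := e + 2 - L) in *.
  assert (hzw : forall p, a + m <= p <= e - m -> phi z p = phi w p).
  { intros p hp. apply (U1p A B X Y phi hX hc m Hm); auto.
    intros j hj. rewrite hzx, hwx; auto; unfold a in *; lia. }
  set (g := e - m - K).
  set (y' := glue g (phi z) (phi w)).
  assert (Yy : Y y').
  { apply (glue_Y Y FY K HY HK); try apply hc; auto.
    intros p hp. apply hzw. unfold a, g in *; lia. }
  set (c := i + N).
  destruct (HM (tr c z) (tr c y')) as [z1 [Xz1 [pz1 az1]]].
  - apply (inv_tr _ (proj2 hX)); auto.
  - apply (inv_tr _ (proj2 hY)); auto.
  - rewrite (code_tr X Y phi hX hc) by auto. intros q hq. unfold tr, y', glue.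
    destruct (Z.leb_spec (q + c) g); auto. unfold c, g in *; lia.
  - set (z'' := tr (- c) z1).
    assert (Xz'' : X z'') by (apply (inv_tr _ (proj2 hX)); auto).
    assert (pz'' : phi z'' = y').
    { unfold z''. rewrite (code_tr X Y phi hX hc) by auto. rewrite pz1, tr_tr.
      replace (-c + c) with 0 by lia. apply tr_0. }
    assert (a1 : agr i (i + N) z z'').
    { assert (h : agr (-N + c) (N + c) z z'').
      { apply tr_agr. unfold z''. rewrite tr_tr. replace (c + -c) with 0 by lia. rewrite tr_0.
        apply agree_agr; auto. }
      eapply agr_sub; eauto; unfold c; lia. }
    assert (a2 : agr i (g - N + 1) z z'').
    { apply (RCP A B X Y phi hX hc N HN i g); auto.
      - rewrite pz''. intros p hp. unfold y', glue. destruct (Z.leb_spec p g); auto; lia.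
      - lia.
      - lia. }
    assert (a3 : agr (a + m) (e + 1) w z'').
    { apply (RCP A B X Y phi hX hc N HN (a + m) (e + 1 + N)); auto.
      - intros p hp. rewrite hwx by (unfold a in *; lia).
        rewrite <- hzx by (unfold a, g in *; lia). apply a2. unfold a, g in *; lia.
      - rewrite pz''. intros p hp. unfold y', glue. destruct (Z.leb_spec p g); auto.
        symmetry; apply hzw; unfold g in *; lia.
      - unfold a in *; lia.
      - lia. }
    exists z''; split; auto.
    intros p hp. destruct (Z_le_gt_dec p (g - N)).
    + rewrite <- a2 by lia. apply hzx. unfold g in *; lia.
    + rewrite <- a3 by (unfold a, g in *; lia). apply hwx. unfold a, g in *; lia.
Qed.
End Step.


Lemma filter_ex {T} (P : T -> Prop) (l : list T) : exists F, forall u, In u F <-> In u l /\ ~ P u.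
Proof.
  induction l as [|t l [F HF]].
  - exists []; simpl; tauto.
  - destruct (classic (P t)) as [h|h].
    + exists F; intros u; rewrite HF; simpl; split; [tauto|]. intros [[e|i] np]; [subst; contradiction|auto].
    + exists (t :: F); intros u; simpl; rewrite HF; split.
      * intros [e|[i np]]; [subst; auto|auto].
      * intros [[e|i] np]; auto.
Qed.

Lemma SFT_part A B (hA : finite_alphabet A) (X : (Z -> A) -> Prop) (Y : (Z -> B) -> Prop) phi :
  shift_space X -> shift_space Y -> SFT Y -> code X Y phi -> right_closing X phi -> open_code X Y phi ->
  SFT X.
Proof.
  intros hX hY [FY HY] hc hrc hop.
  destruct (U1 A B hA X Y phi hX hc) as [m [hm Hm]].
  destruct (U3 A B hA X Y phi hX hc hrc) as [N [hN HN]].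
  destruct (U4 A B hA X Y phi hX hc hop N) as [M [hM HM]].
  destruct (SFT_bound FY) as [K [hK HK]].
  set (L := 2*m + 2*N + 2*K + M + 3).
  set (Ln := Z.to_nat L).
  destruct hA as [lA hlA].
  destruct (filter_ex (is_word X) (words lA Ln)) as [F HF].
  exists F. intros x; split.
  - intros hx u hu [i hi]. apply HF in hu. destruct hu as [_ hu]. apply hu. exists x, i; auto.
  - intros Hx.
    assert (base : forall i, exists z, X z /\ agr i (i + L - 1) z x).
    { intros i. set (u := block x i Ln).
      assert (hw : is_word X u).
      { apply NNPP; intro h. apply (Hx u). apply HF; split; auto.
        assert (e := words_in lA hlA u). unfold u in e at 2. rewrite block_length in e; auto.
        exists i. unfold u. rewrite block_length; auto. }
      destruct hw as [z [j [hz hb]]]. unfold u in hb. rewrite block_length in hb.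
      exists (tr (j - i) z); split. apply (inv_tr _ (proj2 hX)); auto.
      intros p hp. unfold tr.
      assert (e := block_eq_inv _ _ _ _ _ hb (Z.to_nat (p - i)) ltac:(unfold Ln; lia)).
      replace (p + (j - i)) with (j + Z.of_nat (Z.to_nat (p - i))) by lia. rewrite e. f_equal; lia. }
    assert (all : forall n : nat, forall i, exists z, X z /\ agr i (i + Z.of_nat n) z x).
    { induction n as [|n IH]; intros i.
      - destruct (base i) as [z [hz ha]]. exists z; split; auto. eapply agr_sub; eauto; lia.
      - destruct (Z_le_gt_dec (Z.of_nat (Datatypes.S n)) (L - 1)).
        + destruct (base i) as [z [hz ha]]. exists z; split; auto. eapply agr_sub; eauto; lia.
        + destruct (IH i) as [z [hz ha]].
          destruct (base (i + Z.of_nat n + 2 - L)) as [w [hw hwa]].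
          destruct (step A B X Y phi hX hY hc m N M K L hm hN hM hK eq_refl Hm HN HM FY HY HK x i (i + Z.of_nat n) z w)
            as [z'' [h1 h2]]; auto.
          * lia.
          * eapply agr_sub; eauto; lia.
          * exists z''; split; auto. eapply agr_sub; eauto; lia. }
    apply (proj1 hX). intros k.
    destruct (Z_le_gt_dec 0 k).
    + destruct (all (Z.to_nat (2 * k)) (- k)) as [z [hz ha]]. exists z; split; auto.
      intros i hi. symmetry; apply ha; lia.
    + destruct (all 0%nat 0) as [z [hz _]]. exists z; split; auto. intros i hi; lia.
Qed.


Lemma pigeon {T} (f : nat -> T) (W : list T) :
  (forall j, (1 <= j <= length W + 1)%nat -> In (f j) W) ->
  exists j j', (1 <= j < j')%nat /\ (j' <= length W + 1)%nat /\ f j = f j'.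
Proof.
  intros H. apply NNPP; intro hn.
  assert (nd : NoDup (map f (seq 1 (length W + 1)))).
  { apply NoDup_map_NoDup_ForallPairs; [|apply seq_NoDup].
    intros a b ha hb e. apply in_seq in ha, hb.
    destruct (Nat.lt_trichotomy a b) as [h|[h|h]]; auto; exfalso; apply hn.
    - exists a, b; repeat split; auto; lia.
    - exists b, a; repeat split; auto; lia. }
  assert (hi : incl (map f (seq 1 (length W + 1))) W).
  { intros t ht. apply in_map_iff in ht. destruct ht as [j [e hj]]. subst. apply in_seq in hj. apply H; lia. }
  assert (hl := NoDup_incl_length nd hi). rewrite length_map, length_seq in hl. lia.
Qed.

Lemma chain {B} (Y : (Z -> B) -> Prop) FY K (v : Z -> B) (M T : Z) :
  (forall x, Y x <-> (forall u, In u FY -> ~ occurs_in u x)) ->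
  (forall u, In u FY -> Z.of_nat (length u) <= K) ->
  0 <= K -> K <= M -> 2 * M + 1 <= T ->
  forall y1, Y y1 -> (forall p, -M <= p <= M -> y1 p = v p /\ y1 (T + p) = v p) ->
  forall R : nat, exists y, Y y /\ forall j : nat, (j <= R + 1)%nat -> forall p, -M <= p <= M ->
     y (Z.of_nat j * T + p) = v p.
Proof.
  intros HY HK hK hKM hT y1 Yy1 H1.
  induction R as [|R [y [Yy Hy]]].
  - exists y1; split; auto. intros j hj p hp.
    destruct j as [|[|j]]; [| |lia].
    + replace (Z.of_nat 0 * T + p) with p by lia. apply (proj1 (H1 p hp)).
    + replace (Z.of_nat 1 * T + p) with (T + p) by lia. apply (proj2 (H1 p hp)).
  - set (g := Z.of_nat (Datatypes.S R) * T).
    set (y2 := tr (- g) y1).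
    assert (Yy2 : forall p, -M <= p <= M -> y2 (g + p) = v p /\ y2 (g + T + p) = v p).
    { intros p hp. unfold y2, tr. replace (g + p + - g) with p by lia.
      replace (g + T + p + - g) with (T + p) by lia. apply H1; auto. }
    exists (glue g y y2). split.
    + apply (glue_Y Y FY K HY HK); auto.
      * unfold y2. pose proof (proj1 (HY y1) Yy1) as Yy1'.
        apply HY. intros u hu [i hi]. apply (Yy1' u hu). exists (i + - g).
        rewrite <- hi at 2. rewrite block_tr; auto.
      * intros p hp. replace p with (g + (p - g)) by lia.
        rewrite (proj1 (Yy2 (p - g) ltac:(lia))).
        unfold g. apply Hy; lia.
    + intros j hj p hp. unfold glue.
      destruct (Z.leb_spec (Z.of_nat j * T + p) g).
      * apply Hy; auto. destruct (Nat.le_gt_cases j (R + 1)); auto.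
        exfalso. assert (j = R + 2)%nat by lia. subst j. unfold g in *. nia.
      * destruct (Nat.lt_trichotomy j (R + 1)) as [h|[h|h]].
        -- exfalso. assert (Z.of_nat j <= Z.of_nat R) by lia. unfold g in *. nia.
        -- subst j. replace (Z.of_nat (R + 1) * T + p) with (g + p) by (unfold g; lia). apply (Yy2 p hp).
        -- assert (j = R + 2)%nat by lia. subst j.
           replace (Z.of_nat (R + 2) * T + p) with (g + T + p) by (unfold g; lia). apply (Yy2 p hp).
Qed.

Lemma NW_part A B (hA : finite_alphabet A) (X : (Z -> A) -> Prop) (Y : (Z -> B) -> Prop) phi :
  shift_space X -> shift_space Y -> SFT Y -> irreducible Y -> code X Y phi -> right_closing X phi ->
  open_code X Y phi -> nonwandering X.
Proof.
  intros hX hY [FY HY] hirr hc hrc hop.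
  intros u [z0 [j0 [hz0 hb0]]].
  set (l := length u).
  set (z := tr j0 z0).
  assert (Xz : X z) by (apply (inv_tr _ (proj2 hX)); auto).
  assert (bz : block z 0 l = u) by (unfold z; rewrite block_tr; auto).
  destruct (U3 A B hA X Y phi hX hc hrc) as [N [hN HN]].
  destruct (U4 A B hA X Y phi hX hc hop (Z.of_nat l)) as [M0 [hM0 HM0]].
  destruct (SFT_bound FY) as [K [hK HK]].
  set (Mn := Z.to_nat (M0 + N + K + Z.of_nat l)).
  set (M := Z.of_nat Mn).
  assert (hMge : M0 <= M /\ N <= M /\ K <= M /\ Z.of_nat l <= M) by (unfold M, Mn; lia).
  set (q := block (phi z) (- M) (2 * Mn + 1)).
  assert (Wq : is_word Y q).
  { exists (phi z), (- M). split. apply hc; auto. unfold q; rewrite block_length; auto. }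
  destruct (hirr q q Wq Wq) as [w [y0 [j1 [Yy0 hb1]]]].
  set (Tn := (2 * Mn + 1 + length w)%nat).
  set (T := Z.of_nat Tn).
  assert (hql : length q = (2 * Mn + 1)%nat) by (unfold q; apply block_length).
  assert (Hy0 : forall t, (t < 2 * Mn + 1)%nat -> y0 (j1 + Z.of_nat t) = phi z (- M + Z.of_nat t)
      /\ y0 (j1 + T + Z.of_nat t) = phi z (- M + Z.of_nat t)).
  { intros t ht. set (d := phi z 0).
    assert (hlen : length (q ++ w ++ q) = (Tn + (2 * Mn + 1))%nat) by (rewrite !length_app; unfold Tn; lia).
    rewrite hlen in hb1.
    split.
    - rewrite <- (block_nth y0 j1 (Tn + (2 * Mn + 1)) t d) by (unfold Tn; lia). rewrite hb1.
      rewrite app_nth1 by lia. unfold q; rewrite block_nth by lia. auto.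
    - replace (j1 + T + Z.of_nat t) with (j1 + Z.of_nat (Tn + t)) by (unfold T; lia).
      rewrite <- (block_nth y0 j1 (Tn + (2 * Mn + 1)) (Tn + t) d) by lia. rewrite hb1.
      rewrite app_nth2 by (unfold Tn in *; lia). rewrite app_nth2 by (unfold Tn in *; lia).
      replace (Tn + t - length q - length w)%nat with t by (unfold Tn in *; lia).
      unfold q; rewrite block_nth by lia. auto. }
  set (y1 := tr (j1 + M) y0).
  assert (H1 : forall p, -M <= p <= M -> y1 p = phi z p /\ y1 (T + p) = phi z p).
  { intros p hp. destruct (Hy0 (Z.to_nat (p + M)) ltac:(unfold M in *; lia)) as [e1 e2].
    unfold y1, tr. split.
    - replace (p + (j1 + M)) with (j1 + Z.of_nat (Z.to_nat (p + M))) by lia. rewrite e1. f_equal; lia.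
    - replace (T + p + (j1 + M)) with (j1 + T + Z.of_nat (Z.to_nat (p + M))) by lia. rewrite e2. f_equal; lia. }
  assert (Yy1 : Y y1) by (apply (inv_tr _ (proj2 hY)); auto).
  destruct hA as [lA hlA].
  set (Nn := (Z.to_nat N + 1)%nat).
  set (Wn := words lA Nn).
  set (P := (length Wn + 1)%nat).
  destruct (chain Y FY K (phi z) M T HY HK hK ltac:(lia) ltac:(unfold T, Tn, M; lia) y1 Yy1 H1 P)
    as [ys [Yys Hys]].
  assert (Hl : forall j : nat, exists zj, (1 <= j <= P)%nat -> X zj /\ phi zj = ys /\
      forall s, - Z.of_nat l <= s <= Z.of_nat l -> zj (Z.of_nat j * T + s) = z s).
  { intros j. destruct (Nat.le_gt_cases j P) as [hj|hj]; [|exists z; intros; lia].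
    destruct (HM0 z (tr (Z.of_nat j * T) ys) Xz) as [x' [Xx' [px' ax']]].
    - apply (inv_tr _ (proj2 hY)); auto.
    - intros p hp. unfold tr. rewrite Z.add_comm. symmetry; apply Hys; lia.
    - exists (tr (- (Z.of_nat j * T)) x'). intros _. split; [|split].
      + apply (inv_tr _ (proj2 hX)); auto.
      + rewrite (code_tr X Y phi hX hc) by auto. rewrite px', tr_tr.
        replace (- (Z.of_nat j * T) + Z.of_nat j * T) with 0 by lia. apply tr_0.
      + intros s hs. unfold tr. replace (Z.of_nat j * T + s + - (Z.of_nat j * T)) with s by lia.
        symmetry; apply ax'; auto. }
  destruct (functional_choice _ Hl) as [Zf HZf].
  destruct (pigeon (fun j => block (Zf j) 0 Nn) Wn) as [j [j' [hjj [hj'P he]]]].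
  { intros j hj. assert (e := words_in lA hlA (block (Zf j) 0 Nn)). rewrite block_length in e; auto. }
  destruct (HZf j ltac:(unfold P; lia)) as [Xj [pj hj]].
  destruct (HZf j' ltac:(unfold P; lia)) as [Xj' [pj' hj']].
  assert (a0 : agr 0 (0 + N) (Zf j) (Zf j')).
  { intros i hi. assert (e := block_eq_inv _ _ _ _ _ he (Z.to_nat i) ltac:(unfold Nn; lia)).
    replace i with (0 + Z.of_nat (Z.to_nat i)) by lia. auto. }
  assert (a1 := RCP A B X Y phi hX hc N HN 0 (Z.of_nat j' * T + Z.of_nat l + N) (Zf j) (Zf j') Xj Xj' a0
     ltac:(rewrite pj, pj'; intros i hi; auto) (Z.of_nat j' * T + Z.of_nat l)
     ltac:(unfold T, Tn, M in *; nia) ltac:(lia)).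
  set (D := ((j' - j) * Tn - l)%nat).
  exists (block (Zf j) (Z.of_nat j * T + Z.of_nat l) D).
  exists (Zf j), (Z.of_nat j * T). split; auto.
  rewrite !length_app, block_length.
  rewrite block_app, block_app.
  assert (hD : Z.of_nat j * T + Z.of_nat l + Z.of_nat D = Z.of_nat j' * T).
  { unfold D, T. assert (l <= (j' - j) * Tn)%nat by (unfold Tn, M in *; nia). nia. }
  change (length u) with l. rewrite hD. f_equal; [|f_equal].
  - rewrite <- bz. apply block_ext. intros t ht. replace (0 + Z.of_nat t) with (Z.of_nat t) by lia. apply hj; lia.
  - rewrite <- bz. apply block_ext. intros t ht. replace (0 + Z.of_nat t) with (Z.of_nat t) by lia.
    rewrite a1 by (unfold T in *; nia). apply hj'; lia.
Qed.


Theorem proposition3p4 (A B : Type) (hA : finite_alphabet A) (hB : finite_alphabet B)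
  (S : (Z -> A) -> Prop) (Y : (Z -> B) -> Prop) (phi : (Z -> A) -> (Z -> B)) :
  shift_space S -> shift_space Y -> SFT Y -> irreducible Y ->
  code S Y phi -> right_closing S phi -> open_code S Y phi ->
  SFT S /\ nonwandering S.
Proof.
  intros h1 h2 h3 h4 h5 h6 h7. split.
  - exact (SFT_part A B hA S Y phi h1 h2 h3 h5 h6 h7).
  - exact (NW_part A B hA S Y phi h1 h2 h3 h4 h5 h6 h7).
Qed.
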